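(* Let $G$ be a looped simple graph with vertices listed as $v_1,\dots,v_n$. The following are equivalent: (1) there is a sequence of $n-1$ pendant-twin reductions starting from $G$ in which the $i$-th reduction deletes the vertex $v_i$; (2) there is a sequence of $n-1$ isotropic parallel reductions starting from $M[IAS(G)]$ in which the $i$-th reduction removes the vertex triple of $v_i$.
   Context: A looped simple graph is a finite graph in which each vertex carries at most one loop and no two distinct vertices are joined by more than one edge. ''Adjacent''/''neighbors'' refer only to distinct vertices joined by a non-loop edge; $N_G(v)$ is the set of neighbors of $v$; the degree of $v$ is $|N_G(v)|$; $v$ is isolated if $N_G(v)=\emptyset$. $A(G)$ is the $V(G)\times V(G)$ matrix over $GF(2)$ with diagonal entry $1$ exactly at looped vertices and off-diagonal entry $1$ exactly for adjacent pairs. $IAS(G)=(I\mid A(G)\mid A(G)+I)$ over $GF(2)$, rows indexed by $V(G)$; the $v$-columns of the three blocks are labelled $\phi_G(v),\chi_G(v),\psi_G(v)$. $M[IAS(G)]$ is the binary column matroid of $IAS(G)$ on $W(G)=\{\phi_G(v),\chi_G(v),\psi_G(v):v\in V(G)\}$; $\tau_G(v)=\{\phi_G(v),\chi_G(v),\psi_G(v)\}$ is the vertex triple of $v$. Pendant-twin reduction of $G$: delete an isolated vertex; or delete a vertex $v$ that has a twin $w\neq v$, i.e. either $N_G(v)=N_G(w)\neq\emptyset$ (nonadjacent twins) or $N_G(v)\cup\{v\}=N_G(w)\cup\{w\}$ (adjacent twins); or delete a vertex of degree $1$. Isotropic parallel reduction: two elements are parallel in a matroid if both are loops or if they form a $2$-element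 circuit. If $\rho\ne\sigma$ are parallel elements of $M[IAS(G)]$ and $\rho$ is not of the form $\phi_G(\cdot)$, say $\rho\in\tau_G(v)$, the isotropic parallel reduction corresponding to $\rho,\sigma$ is the matroid obtained from $M[IAS(G)]$ by contracting $\phi_G(v)$ and deleting the other two elements of $\tau_G(v)$ (it ''removes the vertex triple of $v$''); this matroid equals $M[IAS(G-v)]$ with the same element labels, so reductions can be iterated. *)

(* Defs.v *)
From HB Require Import structures.
From mathcomp Require Import all_boot all_order all_algebra.
Set Implicit Arguments. Unset Strict Implicit. Unset Printing Implicit Defensive.
Import GRing.Theory.
Local Open Scope ring_scope.

(* A looped simple graph on the vertex set 'I_n (vertex v_(i+1) is i : 'I_n)
   is given by a symmetric irreflexive adjacency relation [adj] and the set
   [loops] of looped vertices.  All constructions below are relative to the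
   induced subgraph G[S] on a vertex set S : {set 'I_n} (the graph obtained
   from G after deleting the vertices outside S). *)

Definition nbhd (n : nat) (adj : rel 'I_n) (S : {set 'I_n}) (v : 'I_n)
  : {set 'I_n} := [set u in S | (u != v) && adj v u].

Definition pendant_twin_red (n : nat) (adj : rel 'I_n) (S : {set 'I_n})
  (v : 'I_n) : Prop :=
  v \in S /\
  (nbhd adj S v = set0
   \/ (exists w, [/\ w \in S, w != v & nbhd adj S v = nbhd adj S w /\ nbhd adj S v != set0])
   \/ (exists w, [/\ w \in S, w != v & v |: nbhd adj S v = w |: nbhd adj S w])
   \/ #|nbhd adj S v| = 1%N).

(* labels of the columns of IAS : phi_G(v), chi_G(v), psi_G(v) *)
Inductive wkind := Phi | Chi | Psi.
Definition welt (n : nat) := (wkind * 'I_n)%type.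

Definition adjmx_entry (n : nat) (adj : rel 'I_n) (loops : {set 'I_n})
  (u v : 'I_n) : 'F_2 :=
  (if u == v then v \in loops else adj u v)%:R.

(* the column of IAS(G[S]) labelled e, as a vector indexed by 'I_n whose
   entries outside S (rows not in V(G[S])) are 0 *)
Definition ias_col (n : nat) (adj : rel 'I_n) (loops : {set 'I_n})
  (S : {set 'I_n}) (e : welt n) : 'rV['F_2]_n :=
  \row_u (if u \in S then
            match e.1 with
            | Phi => ((u == e.2)%:R : 'F_2)
            | Chi => adjmx_entry adj loops u e.2
            | Psi => adjmx_entry adj loops u e.2 + (u == e.2)%:R
            end
          else 0).

Definition in_W (n : nat) (S : {set 'I_n}) (e : welt n) : Prop := e.2 \in S.

(* matroid notions in the binary column matroid M[IAS(G[S])]: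
   a set of elements is independent iff its columns are linearly independent *)
Definition is_loop (n : nat) adj loops (S : {set 'I_n}) (e : welt n) : Prop :=
  in_W S e /\ ~~ free [:: ias_col adj loops S e].

Definition is_circuit2 (n : nat) adj loops (S : {set 'I_n}) (e f : welt n) : Prop :=
  [/\ in_W S e, in_W S f, e <> f &
      [/\ ~~ free [:: ias_col adj loops S e; ias_col adj loops S f],
           free [:: ias_col adj loops S e] & free [:: ias_col adj loops S f]]].

Definition parallel (n : nat) adj loops (S : {set 'I_n}) (e f : welt n) : Prop :=
  (is_loop adj loops S e /\ is_loop adj loops S f) \/ is_circuit2 adj loops S e f.

(* there is an isotropic parallel reduction of M[IAS(G[S])] removing the
   vertex triple of v: parallel rho <> sigma with rho in tau(v), rho not phi.
   (By the stated fact, the resulting matroid is M[IAS(G[S :\ v])].) *)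
Definition iso_parallel_red (n : nat) adj loops (S : {set 'I_n}) (v : 'I_n) : Prop :=
  exists rho sigma : welt n,
    [/\ rho.2 = v, rho.1 <> Phi, rho <> sigma & parallel adj loops S rho sigma].

(* vertex set remaining after deleting v_1, ..., v_i (i.e. 0, ..., i-1) *)
Definition remaining (n : nat) (i : nat) : {set 'I_n} := [set j : 'I_n | i <= j]%N.

(* Main.v *)
Require Import Defs.
From HB Require Import structures.
From mathcomp Require Import all_boot all_order all_algebra.
Import GRing.Theory.
Set Implicit Arguments. Unset Strict Implicit.
Local Open Scope ring_scope.

Definition ktype (k : wkind) (l : bool) : nat :=
  match k with Phi => 0 | Chi => if l then 2 else 1 | Psi => if l then 1 else 2 end.

Definition tset (n : nat) (adj : rel 'I_n) (S : {set 'I_n}) (v : 'I_n) (t : nat)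
  : {set 'I_n} :=
  match t with 0 => [set v] | 1 => nbhd adj S v | _ => v |: nbhd adj S v end.

Lemma F2_11 : (1 + 1 : 'F_2)%R = 0%R. Proof. by apply/val_inj. Qed.

Lemma mem_nbhd n (adj : rel 'I_n) (S : {set 'I_n}) v u :
  (u \in nbhd adj S v) = [&& u \in S, u != v & adj v u].
Proof. by rewrite /nbhd inE. Qed.

Lemma col_tset n (adj : rel 'I_n) loops (S : {set 'I_n}) (k : wkind) (v : 'I_n) :
  symmetric adj -> v \in S ->
  ias_col adj loops S (k, v) =
  (\row_u ((u \in tset adj S v (ktype k (v \in loops)))%:R : 'F_2))%R.
Proof.
move=> sym vS; apply/rowP => u; rewrite !mxE /adjmx_entry /=.
case: (boolP (u \in S)) => uS.
  case: (eqVneq u v) => [->|uv].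
    case: k; case: (v \in loops);
      rewrite /= ?set11 ?setU11 ?mem_nbhd ?eqxx ?andbF /= ?F2_11 ?add0r ?mulr1n ?mulr0n;
      exact: erefl.
  case: k; case: (v \in loops);
      rewrite /= ?in_set1 ?in_setU1 ?mem_nbhd (negbTE uv) ?uS ?(sym v u) /= ?addr0 ?andbT;
      exact: erefl.
have uv : u != v by apply: contraNneq uS => ->.
case: k; case: (v \in loops);
   rewrite /= ?in_set1 ?in_setU1 ?mem_nbhd (negbTE uv) ?(negbTE uS) /= ?andbF ?mulr0n;
   exact: erefl.
Qed.

Lemma b2F_inj (a b : bool) : (a%:R : 'F_2)%R = b%:R -> a = b.
Proof.
case: a; case: b => // /eqP; rewrite ?mulr1n ?mulr0n ?oner_eq0 ?(eq_sym 0) ?oner_eq0 //.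
Qed.

Lemma row_eqb n (f g : 'I_n -> bool) :
  (\row_u ((f u)%:R : 'F_2))%R = (\row_u (g u)%:R)%R <-> f =1 g.
Proof.
split=> [/rowP H u|H]; last by apply/rowP => u; rewrite !mxE H.
by have := H u; rewrite !mxE => /b2F_inj.
Qed.

Lemma row_0b n (f : 'I_n -> bool) :
  (\row_u ((f u)%:R : 'F_2))%R = 0%R <-> forall u, ~~ f u.
Proof.
split=> [/rowP H u|H]; last first.
  by apply/rowP => u; rewrite !mxE (negbTE (H u)) mulr0n.
have := H u; rewrite !mxE; case: (f u) => //.
Qed.

Lemma F2_notfree2 n (a b : 'rV['F_2]_n) :
  a != 0%R -> b != 0%R -> ~~ free [:: a; b] -> a = b.
Proof.
move=> a0 bn0; rewrite free_cons seq1_free span_seq1 negb_and negbK bn0 orbF.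
move=> /vlineP [k ak]; subst a.
have [kE|kE] : k = 0%R \/ k = 1%R.
  by clear a0; case: k => [[|[|m]]] // H; [left|right]; apply/val_inj.
- by move: a0; rewrite kE scale0r eqxx.
- by rewrite kE scale1r.
Qed.

Lemma F2_notfree_same n (a : 'rV['F_2]_n) : ~~ free [:: a; a].
Proof. by rewrite free_cons span_seq1 memv_line. Qed.

Lemma ktype_inj k k' l : ktype k l = ktype k' l -> k = k'.
Proof. by case: k; case: k'; case: l. Qed.

Lemma ktype_le2 k l : (ktype k l <= 2)%N.
Proof. by case: k; case: l. Qed.

Lemma ktype_nPhi k l : k <> Phi -> (ktype k l == 1)%N || (ktype k l == 2)%N.
Proof. by case: k; case: l. Qed.

Lemma ktype_ex l t : (t <= 2)%N -> exists k, ktype k l = t.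
Proof.
case: t => [|[|[|t]]] // _.
- by exists Phi.
- by exists (if l then Psi else Chi); case: l.
- by exists (if l then Chi else Psi); case: l.
Qed.

Lemma col_eq n (adj : rel 'I_n) loops (S : {set 'I_n}) k k' v w :
  symmetric adj -> v \in S -> w \in S ->
  ias_col adj loops S (k, v) = ias_col adj loops S (k', w) <->
  tset adj S v (ktype k (v \in loops)) = tset adj S w (ktype k' (w \in loops)).
Proof.
move=> sym vS wS; rewrite !col_tset //; split => H.
  by apply/setP => u; apply: (proj1 (row_eqb _ _) H u).
by apply/row_eqb => u; rewrite H.
Qed.

Lemma col_0 n (adj : rel 'I_n) loops (S : {set 'I_n}) k v :
  symmetric adj -> v \in S ->
  ias_col adj loops S (k, v) = 0%R <-> tset adj S v (ktype k (v \in loops)) = set0.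
Proof.
move=> sym vS; rewrite !col_tset //; split => H.
  by apply/setP => u; rewrite in_set0; apply/negbTE; apply: (proj1 (row_0b _) H u).
by apply/row_0b => u; rewrite H in_set0.
Qed.

Lemma key_fwd n (adj : rel 'I_n) (S : {set 'I_n}) v :
  v \in S -> pendant_twin_red adj S v ->
  exists w t t', [/\ w \in S, (t == 1)%N || (t == 2)%N, (t' <= 2)%N,
    (v = w -> t <> t') &
    tset adj S v t = tset adj S w t' /\ tset adj S v t != set0].
Proof.
move=> vS [_ [H|[[w [wS wv [E nE]]]|[[w [wS wv E]]|H]]]].
- exists v, 2%N, 0%N; split => //=; split; first by rewrite H setU0.
  by apply/set0Pn; exists v; rewrite setU11.
- exists w, 1%N, 1%N; split => //= vw; by move: wv; rewrite vw eqxx.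
- exists w, 2%N, 2%N; split => //= [vw|]; first by move: wv; rewrite vw eqxx.
  by split => //; apply/set0Pn; exists v; rewrite setU11.
- have [w Hw] := cards1P (introT eqP H).
  have : w \in nbhd adj S v by rewrite Hw set11.
  rewrite mem_nbhd => /and3P [wS _ _].
  exists w, 1%N, 0%N; split => //=; split => //.
  by rewrite Hw; apply/set0Pn; exists w; rewrite set11.
Qed.

Lemma key_back0 n (adj : rel 'I_n) (S : {set 'I_n}) v t :
  v \in S -> t != 0%N -> tset adj S v t = set0 -> pendant_twin_red adj S v.
Proof.
move=> vS; case: t => [|[|t]] // _ /= H; first by split => //; left.
by move: (setU11 v (nbhd adj S v)); rewrite H in_set0.
Qed.

Lemma key_back n (adj : rel 'I_n) (S : {set 'I_n}) v w t t' :
  symmetric adj ->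
  v \in S -> w \in S -> (t == 1)%N || (t == 2)%N -> (t' <= 2)%N ->
  (v = w -> t <> t') -> tset adj S v t = tset adj S w t' ->
  pendant_twin_red adj S v.
Proof.
move=> sym vS wS Ht Ht' Hvw E.
have vN : forall x, x \notin nbhd adj S x.
  by move=> x; rewrite mem_nbhd eqxx andbF.
split => //.
have [N0|nN] := eqVneq (nbhd adj S v) set0; first by left.
have [x xN] := set0Pn _ nN.
move: Ht Ht' Hvw E; case: t => [|[|[|t]]] //; case: t' => [|[|[|t']]] // _ _ Hvw /= E.
- by right; right; right; rewrite E cards1.
- have vw : w != v by apply/eqP => wv; exact: (Hvw (esym wv)).
  by right; left; exists w; split.
- have vw : v != w by apply/eqP => wv; subst w; move: (vN v); rewrite E setU11.
  have : w \in nbhd adj S v by rewrite E setU11.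
  rewrite mem_nbhd => /and3P [_ _ avw].
  have : v \in nbhd adj S w by rewrite mem_nbhd vS vw sym.
  by move=> vNw; move: (vN v); rewrite E in_setU1 vNw orbT.
- have : v \in [set w] by rewrite -E setU11.
  rewrite in_set1 => /eqP vw; subst w.
  have : x \in [set v] by rewrite -E in_setU1 xN orbT.
  rewrite in_set1 => /eqP xv; subst x.
  by rewrite (negbTE (vN v)) in xN.
- have : v \in nbhd adj S w by rewrite -E setU11.
  rewrite mem_nbhd => /and3P [_ vw awv].
  have : w \in nbhd adj S v by rewrite mem_nbhd wS eq_sym vw sym.
  by move=> wN; move: (vN w); rewrite -E in_setU1 wN orbT.
- have vw : w != v by apply/eqP => wv; exact: (Hvw (esym wv) erefl).
  by right; right; left; exists w; split.
Qed.

Lemma step n (adj : rel 'I_n) loops (S : {set 'I_n}) v :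
  symmetric adj -> v \in S ->
  pendant_twin_red adj S v <-> iso_parallel_red adj loops S v.
Proof.
move=> sym vS; split.
  move=> /(key_fwd vS) [w [t [t' [wS Ht Ht' Hvw [E nE]]]]].
  have Ht2 : (t <= 2)%N by case/orP: Ht => /eqP ->.
  have [k Hk] := ktype_ex (v \in loops) Ht2.
  have [k' Hk'] := ktype_ex (w \in loops) Ht'.
  exists (k, v), (k', w); split => //=.
  - by move=> kP; move: Ht; rewrite -Hk kP.
  - by case=> kk vw; apply: (Hvw vw); rewrite -Hk -Hk' kk vw.
  right; split => //=.
  - by case=> kk vw; apply: (Hvw vw); rewrite -Hk -Hk' kk vw.
  have Ec : ias_col adj loops S (k, v) = ias_col adj loops S (k', w).
    by apply/col_eq => //; rewrite Hk Hk'.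
  have n0 : ias_col adj loops S (k, v) != 0%R.
    by apply/eqP => /col_0 H; move: nE; rewrite -Hk H ?eqxx //; apply: H.
  split; [by rewrite Ec F2_notfree_same | by rewrite seq1_free | by rewrite seq1_free -Ec].
move=> [[k v'] [[k' w] [/= vv kP neq par]]]; subst v'.
case: par => [[[_ Hl] _]|[_ wS _ [nf f1 f2]]].
  rewrite seq1_free negbK in Hl.
  move/eqP: Hl => /col_0 H.
  apply: (key_back0 vS _ (H sym vS)).
  by case/orP: (ktype_nPhi (v \in loops) kP) => /eqP ->.
rewrite /in_W /= in wS.
rewrite seq1_free in f1; rewrite seq1_free in f2.
have := F2_notfree2 f1 f2 nf => /col_eq E.
apply: (key_back sym vS wS (ktype_nPhi _ kP) (ktype_le2 _ _) _ (E sym vS wS)).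
move=> vw; subst w => kk; apply: neq; congr (_, _); exact: ktype_inj kk.
Qed.

Theorem corollary9p7 (n : nat) (adj : rel 'I_n) (loops : {set 'I_n})
  (adj_sym : symmetric adj) (adj_irr : irreflexive adj) :
  (forall i : 'I_n, (i.+1 < n)%N -> pendant_twin_red adj (remaining n i) i)
  <->
  (forall i : 'I_n, (i.+1 < n)%N -> iso_parallel_red adj loops (remaining n i) i).
Proof.
have iS : forall i : 'I_n, i \in remaining n i by move=> i; rewrite /remaining inE.
split=> H i Hi.
  by apply/(step loops adj_sym (iS i)); apply: H.
by apply/(step loops adj_sym (iS i)); apply: H.
Qed.
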